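(* Fix $q\in[0,1]$, an odd positive integer $\tau$, and parameters $x(z,T)\in[0,1)$ for $z\in\mathbb Z$, $T\in\{1,\dots,\tau\}$ with $z\equiv T \pmod 2$. For $T\in\{1,\dots,\tau\}$ let $\mathcal L_T$ denote the random operation on configurations $\mathcal L_T=\prod_{z\equiv T \ (\mathrm{mod}\ 2)} W_{(z,z+1),x(z,T)}$ (the factors act on disjoint pairs of sites and commute; they are applied independently). Let $s_1,\dots,s_k$ be a finite sequence of transpositions of neighboring integers. Process 1: start from $\eta(z)=z$, $z\in\mathbb Z$; apply $W_{s_1,1},\dots,W_{s_k,1}$ in this order; then apply $\mathcal L_1,\mathcal L_2,\dots,\mathcal L_\tau$ in this order. Let $\eta_1$ be the resulting random configuration. Process 2: start from $\eta(z)=z$, $z\in\mathbb Z$; apply $\mathcal L_\tau,\mathcal L_{\tau-1},\dots,\mathcal L_1$ in this order (i.e., run the same discrete-time dynamics with time-reversed inhomogeneity parameters); then apply $W_{s_k,1},W_{s_{k-1},1},\dots,W_{s_1,1}$ in this order. Let $\eta_2$ be the resulting random configuration. Then $\eta_1$ and $\eta_2$ are (almost surely) bijections $\mathbb Z\to\mathbb Z$, and $\eta_1$ has the same distribution as the inverse bijection $\eta_2^{-1}$.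
   Context: A configuration is a map $\eta:\mathbb Z\to\mathbb Z\cup\{+\infty\}$; $\eta(z)$ is the color of the particle at site $z$. For $z\in\mathbb Z$ let $\sigma_{(z,z+1)}$ exchange the values $\eta(z)$ and $\eta(z+1)$. For $x\in[0,1]$ the random asymmetric swap $W_{(z,z+1),x}$ maps $\eta$ to: $\sigma_{(z,z+1)}\eta$ with probability $x$ and $\eta$ with probability $1-x$ if $\eta(z)<\eta(z+1)$; $\sigma_{(z,z+1)}\eta$ with probability $qx$ and $\eta$ with probability $1-qx$ if $\eta(z)>\eta(z+1)$; $\eta$ with probability 1 if $\eta(z)=\eta(z+1)$. This discrete-time dynamics (step $T$ applies $\mathcal L_T$) is the colored stochastic six vertex model with inhomogeneities $x(z,T)$. *)

(* Defs.v *)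
From HB Require Import structures.
From mathcomp Require Import all_boot all_order all_algebra.
From mathcomp Require Import all_classical all_reals all_analysis.
Set Implicit Arguments. Unset Strict Implicit. Unset Printing Implicit Defensive.
Import Order.TTheory GRing.Theory Num.Theory.
Local Open Scope classical_set_scope.
Local Open Scope ring_scope.

(* A configuration: the color of the particle at each site.  Starting from the
   identity configuration all colors are finite integers, and swaps only
   permute colors, so configurations reachable here are maps int -> int. *)
Definition config := int -> int.

Definition id_config : config := fun z => z.

Definition swapAt (z : int) (eta : config) : config :=
  fun y => if y == z then eta (z + 1) else if y == z + 1 then eta z else eta y.

(* Randomness is realised by coins: [a] is a coin of probability x (the
   inhomogeneity parameter) and [b] an independent coin of probability q.
   Given colors u = eta(z), v = eta(z+1), the swap happens
   - if u < v : iff a            (probability x)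
   - if u > v : iff a && b       (probability q x)
   - if u = v : never.                                                     *)
Definition swapb (a b : bool) (u v : int) : bool :=
  if u < v then a else if v < u then a && b else false.

Definition Wstep (z : int) (a b : bool) (eta : config) : config :=
  if swapb a b (eta z) (eta (z + 1)) then swapAt z eta else eta.

(* Coin indices: (step number, site, kind), kind false = "x-coin",
   kind true = "q-coin". *)
Definition coin_index := (nat * int * bool)%type.

(* The layer L_T : independent swaps on all pairs (z,z+1), z = T mod 2,
   applied simultaneously (they act on disjoint pairs); the coins used for the
   pair with left endpoint z are c (z,false), c (z,true). *)
Definition layer (T : nat) (c : int -> bool -> bool) (eta : config) : config :=
  fun y =>
    let z := if (2 %| y - T%:Z)%Z then y else y - 1 in
    if swapb (c z false) (c z true) (eta z) (eta (z + 1))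
    then (if y == z then eta (y + 1) else eta (y - 1))
    else eta y.

Section Processes.
Variables (d : measure_display) (Omega : measurableType d).
Variable E : coin_index -> set Omega.

Definition coin (w : Omega) (j : nat) (z : int) (k : bool) : bool :=
  w \in E (j, z, k).

(* Process 1 (s = list of left endpoints of the transpositions s_1..s_k):
   steps 0..k-1 : W_{s_1,1}, ..., W_{s_k,1};
   steps k..k+tau-1 : L_1, ..., L_tau. *)
Definition process1 (tau : nat) (s : seq int) (w : Omega) : config :=
  let eta_s := foldl (fun eta j => Wstep (nth 0 s j) (coin w j (nth 0 s j) false)
                                        (coin w j (nth 0 s j) true) eta)
                     id_config (iota 0 (size s)) in
  foldl (fun eta T => layer T (coin w (size s + T.-1)%N) eta) eta_s (iota 1 tau).

(* Process 2: steps 0..tau-1 : L_tau, ..., L_1;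
   steps tau..tau+k-1 : W_{s_k,1}, ..., W_{s_1,1}. *)
Definition process2 (tau : nat) (s : seq int) (w : Omega) : config :=
  let eta_L := foldl (fun eta j => layer (tau - j)%N (coin w j) eta)
                     id_config (iota 0 tau) in
  foldl (fun eta i =>
           let z := nth 0 s (size s - i.+1)%N in
           Wstep z (coin w (tau + i)%N z false) (coin w (tau + i)%N z true) eta)
        eta_L (iota 0 (size s)).
End Processes.

(* Probability of the x-coin with index (j,z) in process 1 / process 2.
   Coins not used by the process are given probability 0 (irrelevant). *)
Definition xprob1 {R : realType} (tau : nat) (s : seq int) (x : int -> nat -> R)
  (j : nat) (z : int) : R :=
  if (j < size s)%N then (if z == nth 0 s j then 1 else 0)
  else if (j < size s + tau)%N then
         (if (2 %| z - (j - size s).+1%N%:Z)%Z then x z (j - size s).+1%N else 0)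
  else 0.

Definition xprob2 {R : realType} (tau : nat) (s : seq int) (x : int -> nat -> R)
  (j : nat) (z : int) : R :=
  if (j < tau)%N then
    (if (2 %| z - (tau - j)%N%:Z)%Z then x z (tau - j)%N else 0)
  else if (j < tau + size s)%N then
         (if z == nth 0 s (size s - (j - tau).+1)%N then 1 else 0)
  else 0.

Definition mutually_independent {R : realType} d (Omega : measurableType d)
  (P : probability Omega R) (I : eqType) (E : I -> set Omega) : Prop :=
  forall s : seq I, uniq s ->
    P (\big[setI/setT]_(i <- s) E i) = \big[*%E/1%E]_(i <- s) P (E i).

Definition coin_family {R : realType} d (Omega : measurableType d)
  (P : probability Omega R) (E : coin_index -> set Omega)
  (p : nat -> int -> R) (q : R) : Prop :=
  [/\ forall i, measurable (E i),
      mutually_independent P E,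
      forall j z, P (E (j, z, false)) = (p j z)%:E
    & forall j z, P (E (j, z, true)) = q%:E].

(* Product sigma-algebra on configurations: generated by evaluation maps. *)
Definition cylinders : set (set config) :=
  [set A | exists z a, A = [set eta : config | eta z = a]].

Definition config_measurable (A : set config) : Prop := <<s cylinders >> A.

(* Inverse of a bijection int -> int (arbitrary value 0 if no preimage). *)
Definition inv_config (eta : config) : config :=
  fun a => xget 0 [set z | eta z = a].

(* Main.v *)
Require Import Defs.
From HB Require Import structures.
From mathcomp Require Import all_boot all_order all_algebra.
From mathcomp Require Import all_classical all_reals all_analysis.
From mathcomp Require Import zify ring lra.
Import Order.TTheory GRing.Theory Num.Theory.
Local Open Scope classical_set_scope.
Local Open Scope ring_scope.
Set Implicit Arguments. Unset Strict Implicit. Unset Printing Implicit Defensive.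
Ltac split_eqs := repeat (match goal with
 | |- context [ (?a == ?b) ] =>
   lazymatch a with context[if _ then _ else _] => fail | _ =>
   lazymatch b with context[if _ then _ else _] => fail | _ =>
   case: (@eqP _ a b) => ? /= end end
 end).

Definition sw (z y : int) : int := if y == z then z + 1 else if y == z + 1 then z else y.

Lemma swK z y : sw z (sw z y) = y.
Proof. rewrite /sw; split_eqs; lia. Qed.

Lemma swapAtE z (eta : config) y : swapAt z eta y = eta (sw z y).
Proof. by rewrite /swapAt /sw; case: (y == z); case: (y == z + 1). Qed.

Lemma sw_lt c u v : ~ (u = c /\ v = c + 1) -> ~ (u = c + 1 /\ v = c) ->
  (sw c u < sw c v) = (u < v).
Proof.
move=> h1 h2; rewrite /sw; split_eqs; apply/idP/idP; lia.
Qed.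
Definition state := (config * config)%type.
Definition flip (st : state) : state := (st.2, st.1).
Definition swS (z : int) (st : state) : state :=
  (swapAt z st.1, fun c => sw z (st.2 c)).
Definition swL (c : int) (st : state) : state :=
  (fun y => sw c (st.1 y), swapAt c st.2).
Definition sstep (z : int) (a b : bool) (st : state) : state :=
  if swapb a b (st.1 z) (st.1 (z + 1)) then swS z st else st.
Definition valid (st : state) :=
  (forall y, st.2 (st.1 y) = y) /\ (forall c, st.1 (st.2 c) = c).
Definition st0 : state := (id_config, id_config).

Lemma valid_st0 : valid st0. Proof. by []. Qed.

Lemma valid_flip st : valid st -> valid (flip st).
Proof. by case=> h1 h2; split. Qed.

Lemma valid_swS z st : valid st -> valid (swS z st).
Proof. by case=> h1 h2; split=> y /=; rewrite !swapAtE ?swK ?h1 ?h2 ?swK. Qed.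

Lemma valid_swL c st : valid st -> valid (swL c st).
Proof. by case=> h1 h2; split=> y /=; rewrite !swapAtE ?swK ?h1 ?h2 ?swK. Qed.

Lemma valid_sstep z a b st : valid st -> valid (sstep z a b st).
Proof. by move=> v; rewrite /sstep; case: ifP => _ //; apply: valid_swS. Qed.

Lemma swS_K z st : swS z (swS z st) = st.
Proof.
case: st => e x; rewrite /swS /=; congr pair; apply: funext => y;
  by rewrite ?swapAtE swK.
Qed.

Lemma swL_K c st : swL c (swL c st) = st.
Proof.
case: st => e x; rewrite /swL /=; congr pair; apply: funext => y;
  by rewrite ?swapAtE swK.
Qed.

Lemma swLS c z st : swL c (swS z st) = swS z (swL c st).
Proof.
case: st => e x; rewrite /swL /swS /=; congr pair; apply: funext => y;
  by rewrite !swapAtE.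
Qed.

Lemma sw_pair (g h : config) z c : (forall y, g (h y) = y) ->
  (h z = c /\ h (z + 1) = c + 1) \/ (h z = c + 1 /\ h (z + 1) = c) ->
  forall y, h (sw z y) = sw c (h y).
Proof.
move=> gh hz y; rewrite /sw.
have [->|nz] := eqVneq y z; first by rewrite ?eqxx; case: hz => -[-> ->];
   rewrite /sw; split_eqs; lia.
have [->|nz1] := eqVneq y (z + 1).
  by rewrite ?(negbTE nz) ?eqxx; case: hz => -[-> ->]; split_eqs; lia.
rewrite ?(negbTE nz) ?(negbTE nz1).
have hc : h y != c.
  apply/eqP => e; move/eqP: nz; move/eqP: nz1 => nz1 nz.
  case: hz => -[h1 h2].
  - by apply: nz; rewrite -(gh y) e -h1 gh.
  - by apply: nz1; rewrite -(gh y) e -h2 gh.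
have hc1 : h y != c + 1.
  apply/eqP => e; move/eqP: nz; move/eqP: nz1 => nz1 nz.
  case: hz => -[h1 h2].
  - by apply: nz1; rewrite -(gh y) e -h2 gh.
  - by apply: nz; rewrite -(gh y) e -h1 gh.
by rewrite (negbTE hc) (negbTE hc1).
Qed.

Lemma swS_swL z c st : valid st ->
  (st.1 z = c /\ st.1 (z + 1) = c + 1) \/ (st.1 z = c + 1 /\ st.1 (z + 1) = c) ->
  swS z st = swL c st.
Proof.
case: st => e x [/= h1 h2] hz.
have hx : (x c = z /\ x (c + 1) = z + 1) \/ (x c = z + 1 /\ x (c + 1) = z).
  by case: hz => -[<- <-]; rewrite !h1; [left|right].
rewrite /swS /swL /=; congr pair; apply: funext => y.
  by rewrite swapAtE (sw_pair h1 hz).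
by rewrite swapAtE (sw_pair h2 hx).
Qed.

Section Ops.
Variable R : realType.
Variable q : R.

Definition alph (p : R) (u v : int) : R :=
  if u < v then p else if v < u then p * q else 0.

Definition Rop (z : int) (p : R) (f : state -> R) (st : state) : R :=
  p * q * f (sstep z true true st) + p * (1 - q) * f (sstep z true false st)
  + (1 - p) * q * f (sstep z false true st)
  + (1 - p) * (1 - q) * f (sstep z false false st).

Definition Lop (c : int) (p : R) (f : state -> R) (st : state) : R :=
  Rop c p (fun st' => f (flip st')) (flip st).

Lemma RopE z p f st : Rop z p f st =
  alph p (st.1 z) (st.1 (z + 1)) * f (swS z st)
  + (1 - alph p (st.1 z) (st.1 (z + 1))) * f st.
Proof.
rewrite /Rop /sstep /swapb /alph.
case: (st.1 z < st.1 (z + 1)); case: (st.1 (z + 1) < st.1 z) => /=; ring.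
Qed.

Lemma LopE c p f st : Lop c p f st =
  alph p (st.2 c) (st.2 (c + 1)) * f (swL c st)
  + (1 - alph p (st.2 c) (st.2 (c + 1))) * f st.
Proof. by case: st => e x; rewrite /Lop RopE. Qed.

Lemma alph_lt p u v : u < v -> alph p u v = p.
Proof. by rewrite /alph => ->. Qed.
Lemma alph_gt p u v : v < u -> alph p u v = p * q.
Proof. move=> h; rewrite /alph h; have -> : (u < v) = false by apply/negbTE; lia. by []. Qed.

Lemma alph_sw p c u v : ~ (u = c /\ v = c + 1) -> ~ (u = c + 1 /\ v = c) ->
  alph p (sw c u) (sw c v) = alph p u v.
Proof.
move=> h1 h2; rewrite /alph sw_lt // sw_lt //; intuition.
Qed.

Lemma comm_RL z p c r f st : valid st ->
  Rop z p (Lop c r f) st = Lop c r (Rop z p f) st.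
Proof.
move=> v; rewrite !(RopE, LopE) swLS.
case: (v) => h1 h2.
have [hz|nh] : ((st.1 z = c /\ st.1 (z + 1) = c + 1) \/ (st.1 z = c + 1 /\ st.1 (z + 1) = c))
   \/ ~ ((st.1 z = c /\ st.1 (z + 1) = c + 1) \/ (st.1 z = c + 1 /\ st.1 (z + 1) = c)).
  exact: EM.
- have E := swS_swL v hz.
  have E2 : swS z (swL c st) = st by rewrite -E swS_K.
  rewrite E2 /= ?swapAtE -E /=.
  case: hz => -[e1 e2].
  + have x1 : st.2 c = z by rewrite -e1 h1.
    have x2 : st.2 (c + 1) = z + 1 by rewrite -e2 h1.
    rewrite e1 e2 x1 x2 /sw !eqxx.
    have -> : (z + 1 == z) = false by apply/negbTE; apply/eqP; lia.
    have -> : (c + 1 == c) = false by apply/negbTE; apply/eqP; lia.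
    rewrite /= (@alph_lt _ z) ?(@alph_lt _ c) ?(@alph_gt _ (z+1)) ?(@alph_gt _ (c+1)); try lia.
    ring.
  + have x1 : st.2 c = z + 1 by rewrite -e2 h1.
    have x2 : st.2 (c + 1) = z by rewrite -e1 h1.
    rewrite e1 e2 x1 x2 /sw !eqxx.
    have -> : (z + 1 == z) = false by apply/negbTE; apply/eqP; lia.
    have -> : (c + 1 == c) = false by apply/negbTE; apply/eqP; lia.
    rewrite /= (@alph_lt _ z) ?(@alph_lt _ c) ?(@alph_gt _ (z+1)) ?(@alph_gt _ (c+1)); try lia.
    ring.
- have nx : ~ ((st.2 c = z /\ st.2 (c + 1) = z + 1) \/ (st.2 c = z + 1 /\ st.2 (c + 1) = z)).
    move=> [[e1 e2]|[e1 e2]]; apply: nh.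
    + by left; split; [rewrite -e1 h2|rewrite -e2 h2].
    + by right; split; [rewrite -e2 h2|rewrite -e1 h2].
  rewrite /= ?swapAtE alph_sw ?alph_sw; try ring;
  first [by move=> hh; apply: nh; left | by move=> hh; apply: nh; right
        | by move=> hh; apply: nx; left | by move=> hh; apply: nx; right].
Qed.
End Ops.
Section Seqs.
Variables (R : realType) (q : R).
Definition Rseq (ops : seq (int * R)) (f : state -> R) : state -> R :=
  foldr (fun o g => Rop q o.1 o.2 g) f ops.

Lemma Rop_ext z p f g st : (forall st', valid st' -> f st' = g st') ->
  valid st -> Rop q z p f st = Rop q z p g st.
Proof. by move=> fg v; rewrite /Rop !fg //; apply: valid_sstep. Qed.

Lemma Rseq_ext ops f g : (forall st, valid st -> f st = g st) ->
  forall st, valid st -> Rseq ops f st = Rseq ops g st.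
Proof.
move=> fg; elim: ops => [|o ops IH] st v /=; first exact: fg.
by apply: Rop_ext => // st' v'; apply: IH.
Qed.

Lemma Lop_Rseq c r ops f st : valid st ->
  Lop q c r (Rseq ops f) st = Rseq ops (Lop q c r f) st.
Proof.
elim: ops st => [|o ops IH] st v //=.
by rewrite -comm_RL //; apply: Rop_ext => // st' v'; rewrite IH.
Qed.

Lemma RL_st0 z p f : Rop q z p f st0 = Lop q z p f st0.
Proof.
rewrite RopE LopE.
have -> : swL z st0 = swS z st0.
  by rewrite /swL /swS; congr pair; apply: funext => y; rewrite swapAtE.
by [].
Qed.

Lemma main_comb ops f :
  Rseq ops f st0 = Rseq (rev ops) (fun st => f (flip st)) st0.
Proof.
elim: ops f => [|o ops IH] f //=.
rewrite RL_st0 Lop_Rseq ?valid_st0 // IH rev_cons -cats1 /Rseq foldr_cat /=.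
congr (foldr _ _ _ _).
by apply: funext => -[a b].
Qed.
End Seqs.
Definition runS (ops : seq (nat * int)) (c : coin_index -> bool) (st : state) : state :=
  foldl (fun st o => sstep o.2 (c (o.1, o.2, false)) (c (o.1, o.2, true)) st) st ops.
Definition Keys (ops : seq (nat * int)) : seq coin_index :=
  flatten [seq [:: (o.1, o.2, false); (o.1, o.2, true)] | o <- ops].
Definition indf (R : realType) (f : state -> bool) : state -> R :=
  fun st => if f st then 1 else 0.

Section Prob.
Variables (R : realType) (d : measure_display) (Omega : measurableType d).
Variables (P : probability Omega R) (E : coin_index -> set Omega).
Variables (pf : nat -> int -> R) (q : R).
Hypothesis hc : coin_family P E pf q.

Definition AJ (J : seq coin_index) : set Omega := \big[setI/setT]_(i <- J) E i.
Definition pr (S : set Omega) : R := fine (P S).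
Definition cw (w : Omega) : coin_index -> bool := fun i => w \in E i.

Lemma mE i : measurable (E i). Proof. by case: hc. Qed.

Lemma mAJ J : measurable (AJ J).
Proof.
elim: J => [|i J IH]; rewrite /AJ ?big_nil ?big_cons //; apply: measurableI; [exact: mE | exact: IH].
Qed.

Lemma PE S : measurable S -> P S = (pr S)%:E.
Proof. by move=> mS; rewrite /pr fineK // fin_num_measure. Qed.

Lemma prU X Y : measurable X -> measurable Y -> X `&` Y = set0 ->
  pr (X `|` Y) = pr X + pr Y.
Proof. by move=> mX mY XY; rewrite {1}/pr measureU // fineD ?fin_num_measure. Qed.

Lemma pr0 : pr set0 = 0. Proof. by rewrite /pr measure0. Qed.
Lemma prT : pr setT = 1. Proof. by rewrite /pr probability_setT. Qed.

Lemma prAJ_cons i J : uniq (i :: J) -> pr (AJ (i :: J)) = pr (E i) * pr (AJ J).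
Proof.
move=> u; have [_ ind _ _] := hc.
have uJ : uniq J by case/andP: u.
rewrite /pr /AJ (ind _ u) big_cons -(ind _ uJ) fineM //.
  exact: fin_num_measure (mE i).
exact: fin_num_measure (mAJ J).
Qed.

Lemma prEx j z : pr (E (j, z, false)) = pf j z.
Proof. by have [_ _ h _] := hc; rewrite /pr h. Qed.
Lemma prEq j z : pr (E (j, z, true)) = q.
Proof. by have [_ _ _ h] := hc; rewrite /pr h. Qed.

Definition Good (K : seq coin_index) (S : set Omega) (v : R) :=
  measurable S /\ forall J, uniq J -> (forall j, j \in J -> j \notin K) ->
    pr (AJ J `&` S) = pr (AJ J) * v.

Lemma Good_T K : Good K setT 1.
Proof. by split=> // J _ _; rewrite setIT mulr1. Qed.

Lemma Good_0 K : Good K set0 0.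
Proof. by split=> // J _ _; rewrite setI0 pr0 mulr0. Qed.

Lemma Good_U K S1 S2 v1 v2 : Good K S1 v1 -> Good K S2 v2 -> S1 `&` S2 = set0 ->
  Good K (S1 `|` S2) (v1 + v2).
Proof.
move=> [m1 h1] [m2 h2] S12; split; first exact: measurableU.
move=> J u hJ; rewrite setIUr prU ?h1 ?h2 ?mulrDr //; try (apply: measurableI => //; exact: mAJ).
by rewrite setIACA S12 setI0.
Qed.

Lemma Good_E i K S v : Good K S v -> i \notin K ->
  Good (i :: K) (E i `&` S) (pr (E i) * v).
Proof.
move=> [mS h] iK; split; first by apply: measurableI => //; exact: mE.
move=> J u hJ.
have iJ : i \notin J by apply/negP => /hJ; rewrite inE eqxx.
have u' : uniq (i :: J) by rewrite /= iJ u.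
have -> : AJ J `&` (E i `&` S) = AJ (i :: J) `&` S.
  by rewrite /AJ big_cons setIA (setIC (\big[setI/setT]_(j <- J) E j)).
rewrite h // ?prAJ_cons //; first by rewrite mulrA (mulrC (pr (AJ J))).
move=> j; rewrite inE => /orP [/eqP -> //|jJ].
by have := hJ _ jJ; rewrite inE negb_or => /andP [].
Qed.

Lemma Good_C i K S v : Good K S v -> i \notin K ->
  Good (i :: K) (~` E i `&` S) ((1 - pr (E i)) * v).
Proof.
move=> G iK; have [mS h] := G; have [mES hE] := Good_E G iK.
split; first by apply: measurableI => //; apply: measurableC; exact: mE.
move=> J u hJ.
have hJ' : forall j, j \in J -> j \notin K.
  by move=> j /hJ; rewrite inE negb_or => /andP [].
have e : AJ J `&` S = (AJ J `&` (E i `&` S)) `|` (AJ J `&` (~` E i `&` S)).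
  by rewrite -setIUr -setIUl setUCr setTI.
have := h J u hJ'; rewrite e prU; first last.
- apply/seteqP; split => w //= [[_ [a _]] [_ [b _]]]; exact: b a.
- apply: measurableI; first exact: mAJ.
  by apply: measurableI => //; apply: measurableC; exact: mE.
- by apply: measurableI; [exact: mAJ | exact: mES].
rewrite hE // => e2.
have -> : pr (AJ J `&` (~` E i `&` S)) = pr (AJ J) * v - pr (AJ J) * (pr (E i) * v).
  by rewrite -e2; ring.
ring.
Qed.

Definition Ca (a : bool) (i : coin_index) : set Omega := if a then E i else ~` E i.

Lemma CaP a i w : Ca a i w <-> cw w i = a.
Proof.
rewrite /Ca /cw; case: a.
  by split; [move=> h; exact: mem_set | move=> h; exact: set_mem].
split; [move=> h; apply/negbTE/negP => /set_mem | move=> /negbT/negP h /(@mem_set _ (E i))].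
  exact: h.
exact: h.
Qed.

Lemma Good_Ca a i K S v : Good K S v -> i \notin K ->
  Good (i :: K) (Ca a i `&` S) ((if a then pr (E i) else 1 - pr (E i)) * v).
Proof. by case: a => G iK; [exact: Good_E | exact: Good_C]. Qed.

Definition pops (ops : seq (nat * int)) : seq (int * R) :=
  [seq (o.2, pf o.1 o.2) | o <- ops].

Lemma Good_run ops : uniq (Keys ops) -> forall (f : state -> bool) st,
  Good (Keys ops) [set w | f (runS ops (cw w) st)]
       (Rseq q (pops ops) (indf R f) st).
Proof.
elim: ops => [|[j z] ops IH] u f st.
  have -> : [set w | f (runS [::] (cw w) st)] = if f st then setT else set0.
    by apply/seteqP; split=> w /=; case: (f st).
  by rewrite /= /indf; case: (f st); [exact: Good_T | exact: Good_0].
set ix := (j, z, false); set iq := (j, z, true).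
have [nx nq uK] : [/\ ix \notin iq :: Keys ops, iq \notin Keys ops & uniq (Keys ops)].
  by move: u; rewrite /Keys /= => /andP [-> /andP [-> ->]].
pose S a b := [set w | f (runS ops (cw w) (sstep z a b st))].
pose u' a b := Ca a ix `&` (Ca b iq `&` S a b).
pose V a b := Rseq q (pops ops) (indf R f) (sstep z a b st).
have G : forall a b, Good (ix :: iq :: Keys ops) (u' a b)
   ((if a then pf j z else 1 - pf j z) * ((if b then q else 1 - q) * V a b)).
  move=> a b; have := Good_Ca a (Good_Ca b (IH uK f (sstep z a b st)) nq) nx.
  by rewrite prEx prEq.
have D : forall a b a' b', (a != a') || (b != b') -> u' a b `&` u' a' b' = set0.
  move=> a b a' b' neq; apply/seteqP; split => w //=.
  move=> [[/CaP e1 [/CaP e2 _]] [/CaP e3 [/CaP e4 _]]].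
  by move: neq; rewrite -e1 -e2 -e3 -e4 !eqxx.
have eqS : [set w | f (runS ((j, z) :: ops) (cw w) st)] =
   ((u' true true `|` u' true false) `|` u' false true) `|` u' false false.
  apply/seteqP; split => w /=.
    move=> h.
    have hx : Ca (cw w ix) ix w by exact: (proj2 (CaP _ _ _) erefl).
    have hq : Ca (cw w iq) iq w by exact: (proj2 (CaP _ _ _) erefl).
    move: hx hq h; rewrite /u' /S /=.
    case: (cw w ix); case: (cw w iq) => hx hq h.
    - by left; left; left.
    - by left; left; right.
    - by left; right.
    - by right.
  move=> H; rewrite /=; move: H; rewrite /u' /S.
  by case=> [[[|]|]|] [/CaP -> [/CaP -> h]].
rewrite eqS.
have -> : Rseq q (pops ((j, z) :: ops)) (indf R f) st =
   ((pf j z * (q * V true true) + pf j z * ((1 - q) * V true false))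
   + (1 - pf j z) * (q * V false true)) + (1 - pf j z) * ((1 - q) * V false false).
  by rewrite /= /Rop /V; ring.
apply: Good_U; first apply: Good_U; first apply: Good_U.
all: try exact: G.
- exact: D.
- by rewrite setIUl !D ?setU0.
- by rewrite !setIUl !D ?setU0.
Qed.

Lemma prob_run ops (f : state -> bool) st : uniq (Keys ops) ->
  measurable [set w | f (runS ops (cw w) st)] /\
  P [set w | f (runS ops (cw w) st)] = (Rseq q (pops ops) (indf R f) st)%:E.
Proof.
move=> u; have [m h] := Good_run u f st; split => //.
have h0 : forall j, j \in [::] -> j \notin Keys ops by [].
have := h [::] erefl h0; rewrite /AJ big_nil !setTI prT mul1r => <-.
exact: PE.
Qed.
End Prob.
Definition runC (ops : seq (nat * int)) (c : coin_index -> bool) (eta : config) : config :=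
  foldl (fun eta o => Wstep o.2 (c (o.1, o.2, false)) (c (o.1, o.2, true)) eta) eta ops.

Lemma runS_fst ops c st : (runS ops c st).1 = runC ops c st.1.
Proof.
elim: ops st => [|o ops IH] st //=.
rewrite IH; congr runC; rewrite /sstep /Wstep; by case: ifP.
Qed.

Definition zy (T : nat) (y : int) : int := if (2 %| y - T%:Z)%Z then y else y - 1.

Lemma zy_par T y : (2 %| zy T y - T%:Z)%Z.
Proof. rewrite /zy; case: ifP => h //; move/negbT: h => h; lia. Qed.

Lemma zy_range T y : (zy T y = y) \/ (zy T y = y - 1).
Proof. by rewrite /zy; case: ifP; [left|right]. Qed.

Lemma zy_pair T z y : (2 %| z - T%:Z)%Z -> (y = z \/ y = z + 1) -> zy T y = z.
Proof.
move=> hz [->|->]; rewrite /zy; first by rewrite hz.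
case: ifP => h; last lia.
exfalso; lia.
Qed.

Lemma layerE T c (eta : config) y : layer T c eta y =
  let z := zy T y in
  if swapb (c z false) (c z true) (eta z) (eta (z + 1))
  then (if y == z then eta (z + 1) else eta z)
  else (if y == z then eta z else eta (z + 1)).
Proof.
rewrite /layer -/(zy T y) /=.
case: (zy_range T y) => ->; rewrite ?eqxx.
  by case: ifP.
have -> : (y == y - 1) = false by apply/negbTE/eqP; lia.
by rewrite subrK.
Qed.

Lemma Wstep_away z a b (eta : config) y : y != z -> y != z + 1 -> Wstep z a b eta y = eta y.
Proof. by move=> h1 h2; rewrite /Wstep; case: ifP => // _; rewrite /swapAt (negbTE h1) (negbTE h2). Qed.

Lemma Wstep_layer T c z (eta : config) y : (2 %| z - T%:Z)%Z -> zy T y = z ->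
  Wstep z (c z false) (c z true) eta y = layer T c eta y.
Proof.
move=> hz hy; rewrite layerE /= hy /Wstep.
have : y = z \/ y = z + 1 by case: (zy_range T y); lia.
case=> ->; rewrite ?eqxx.
  by case: ifP => _ //; rewrite /swapAt eqxx.
have -> : (z + 1 == z) = false by apply/negbTE/eqP; lia.
by case: ifP => _ //; rewrite /swapAt eqxx; have -> : (z + 1 == z) = false by apply/negbTE/eqP; lia.
Qed.

Lemma layer_W_other T c z (eta : config) y : (2 %| z - T%:Z)%Z -> zy T y != z ->
  layer T c (Wstep z (c z false) (c z true) eta) y = layer T c eta y.
Proof.
move=> hz hy; rewrite !layerE /=.
have hp := zy_par T y.
have a1 : zy T y != z by [].
have a2 : zy T y != z + 1 by apply/eqP => e; move: hz hp; rewrite e => hz hp; lia.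
have a3 : zy T y + 1 != z by apply/eqP => e; move: hz hp; rewrite -e => hz hp; lia.
have a4 : zy T y + 1 != z + 1 by apply/eqP => e; move/eqP: hy; lia.
by rewrite !Wstep_away.
Qed.

Definition truncL (zs : seq int) (T : nat) (c : int -> bool -> bool) (eta : config) : config :=
  foldl (fun eta z => Wstep z (c z false) (c z true) eta) eta zs.

Lemma truncL_exact zs T c : uniq zs -> all (fun z => (2 %| z - T%:Z)%Z) zs ->
  forall eta y, truncL zs T c eta y = if zy T y \in zs then layer T c eta y else eta y.
Proof.
elim: zs => [|z zs IH] //= /andP [zn u] /andP [pz pzs] eta y.
rewrite IH // inE.
have [e|ne] := eqVneq (zy T y) z.
  rewrite e ?eqxx (negbTE zn) /=; exact: Wstep_layer.
rewrite /=; case: ifP => _; first exact: layer_W_other.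
apply: Wstep_away; apply/eqP => e; move/eqP: ne; apply; apply: zy_pair => //; lia.
Qed.

Definition agree (lo hi : int) (eta eta' : config) :=
  forall y, lo <= y <= hi -> eta y = eta' y.

Lemma agree_sub lo hi lo' hi' eta eta' : lo <= lo' -> hi' <= hi ->
  agree lo hi eta eta' -> agree lo' hi' eta eta'.
Proof. move=> h1 h2 h y hy; apply: h; lia. Qed.

Lemma Wstep_local z a b eta eta' lo hi : agree (lo - 1) (hi + 1) eta eta' ->
  agree lo hi (Wstep z a b eta) (Wstep z a b eta').
Proof.
move=> h y hy.
have [hz|hz] := boolP ((y == z) || (y == z + 1)).
  have e1 : eta z = eta' z by apply: h; case/orP: hz => /eqP; lia.
  have e2 : eta (z + 1) = eta' (z + 1) by apply: h; case/orP: hz => /eqP; lia.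
  rewrite /Wstep e1 e2; case: ifP => _; last by apply: h; lia.
  by rewrite !swapAtE; case/orP: hz => /eqP ->; rewrite /sw ?eqxx //;
    have -> : (z + 1 == z) = false by apply/negbTE/eqP; lia.
rewrite negb_or in hz; case/andP: hz => h1 h2.
rewrite !Wstep_away //; apply: h; lia.
Qed.

Lemma layer_local T c eta eta' lo hi : agree (lo - 1) (hi + 1) eta eta' ->
  agree lo hi (layer T c eta) (layer T c eta').
Proof.
move=> h y hy; rewrite !layerE /=.
have e1 : eta (zy T y) = eta' (zy T y) by apply: h; case: (zy_range T y); lia.
have e2 : eta (zy T y + 1) = eta' (zy T y + 1) by apply: h; case: (zy_range T y); lia.
by rewrite e1 e2.
Qed.

Lemma truncL_local (M : int) zs T c eta eta' lo hi :
  (forall z, - M <= z <= M -> (2 %| z - T%:Z)%Z -> z \in zs) ->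
  uniq zs -> all (fun z => (2 %| z - T%:Z)%Z) zs ->
  - M + 1 <= lo -> hi <= M ->
  agree (lo - 1) (hi + 1) eta eta' -> agree lo hi (layer T c eta) (truncL zs T c eta').
Proof.
move=> hzs u pz hlo hhi h y hy.
rewrite truncL_exact // hzs; first exact: layer_local h y hy.
  case: (zy_range T y); lia.
exact: zy_par.
Qed.

Definition loc (M : int) (A : Type) (F G : A -> config -> config) :=
  forall a eta eta' lo hi, - M + 1 <= lo -> hi <= M ->
    agree (lo - 1) (hi + 1) eta eta' -> agree lo hi (F a eta) (G a eta').

Lemma agree_foldl (M : int) (A : Type) (F G : A -> config -> config) : loc M F G ->
  forall l eta eta' lo hi, - M <= lo - (size l)%:Z -> hi + (size l)%:Z <= M ->
  agree (lo - (size l)%:Z) (hi + (size l)%:Z) eta eta' ->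
  agree lo hi (foldl (fun e a => F a e) eta l) (foldl (fun e a => G a e) eta' l).
Proof.
rewrite /loc => hl; elim=> [|a l IH] eta eta' lo hi.
  by move=> h1 h2 h; apply: agree_sub h; lia.
rewrite [size _]/= => h1 h2 h /=.
apply: IH; try lia.
have := hl a eta eta' (lo - (size l)%:Z) (hi + (size l)%:Z).
move=> /(_ _ _ _); apply; try lia.
by apply: agree_sub h; lia.
Qed.
Lemma foldl_mapE (A B C : Type) (f : A -> B -> A) (g : C -> B) z l :
  foldl f z (map g l) = foldl (fun z x => f z (g x)) z l.
Proof. by elim: l z => //= x l IH z; rewrite IH. Qed.

Definition zsT (M : nat) (T : nat) : seq int :=
  [seq z <- [seq (i%:Z - M%:Z) | i <- iota 0 (M + M).+1] | (2 %| z - T%:Z)%Z].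

Lemma zsT_mem M T z : (z \in zsT M T) = ((- (M%:Z) <= z <= M%:Z) && (2 %| z - T%:Z)%Z).
Proof.
rewrite /zsT mem_filter andbC; congr andb.
apply/mapP/idP.
  by move=> [i]; rewrite mem_iota => hi ->; lia.
move=> h; exists (absz (z + M%:Z)); first by rewrite mem_iota; lia.
lia.
Qed.

Lemma zsT_uniq M T : uniq (zsT M T).
Proof.
apply: filter_uniq; rewrite map_inj_uniq ?iota_uniq //.
move=> i j h; have : i%:Z = j%:Z by lia.
by case.
Qed.

Lemma zsT_par M T : all (fun z => (2 %| z - T%:Z)%Z) (zsT M T).
Proof. exact: filter_all. Qed.

Definition W1 (s : seq int) := [seq (j, nth 0 s j) | j <- iota 0 (size s)].
Definition LY1 (s : seq int) tau M :=
  flatten [seq [seq ((size s + T.-1)%N, z) | z <- zsT M T] | T <- iota 1 tau].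
Definition OPS1 s tau M := W1 s ++ LY1 s tau M.
Definition LY2 tau M :=
  flatten [seq [seq (j, z) | z <- rev (zsT M (tau - j))] | j <- iota 0 tau].
Definition W2 (s : seq int) tau :=
  [seq ((tau + i)%N, nth 0 s (size s - i.+1)) | i <- iota 0 (size s)].
Definition OPS2 s tau M := LY2 tau M ++ W2 s tau.

Lemma runC_cat l1 l2 c eta : runC (l1 ++ l2) c eta = runC l2 c (runC l1 c eta).
Proof. exact: foldl_cat. Qed.

Lemma runC_flatten (A : Type) (g : A -> seq (nat * int)) l c eta :
  runC (flatten [seq g t | t <- l]) c eta = foldl (fun e t => runC (g t) c e) eta l.
Proof. by elim: l eta => //= t l IH eta; rewrite runC_cat IH. Qed.

Lemma runC_block j zs T c eta :
  runC [seq (j, z) | z <- zs] c eta = truncL zs T (fun z k => c (j, z, k)) eta.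
Proof. by rewrite /runC foldl_mapE. Qed.

Lemma loc_layer (M : nat) (zsf : nat -> seq int) (Tf : nat -> nat) (cf : nat -> int -> bool -> bool) :
  (forall t, zsf t =i zsT M (Tf t)) -> (forall t, uniq (zsf t)) ->
  loc M%:Z (fun t e => layer (Tf t) (cf t) e) (fun t e => truncL (zsf t) (Tf t) (cf t) e).
Proof.
move=> hm hu t eta eta' lo hi h1 h2 h.
apply: (truncL_local (M := M%:Z)) => //.
  by move=> z hz hp; rewrite hm zsT_mem hp andbT; lia.
by apply/allP => z; rewrite hm zsT_mem => /andP [].
Qed.

Section Agree.
Variables (d : measure_display) (Omega : measurableType d) (E : coin_index -> set Omega).
Variables (tau : nat) (s : seq int) (M : nat) (Q : int).
Hypothesis hM : Q + tau%:Z + (size s)%:Z <= M%:Z.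
Hypothesis hQ : 0 <= Q.

Lemma agree1 w : agree (- Q) Q (process1 E tau s w) (runC (OPS1 s tau M) (cw E w) id_config).
Proof.
rewrite runC_cat /LY1 runC_flatten.
have -> : process1 E tau s w = foldl (fun e T => layer T (fun z k => cw E w ((size s + T.-1)%N, z, k)) e)
    (runC (W1 s) (cw E w) id_config) (iota 1 tau).
  by rewrite /process1 /runC /W1 foldl_mapE.
set e0 := runC (W1 s) (cw E w) id_config.
have := @agree_foldl M%:Z nat (fun T e => layer T (fun z k => cw E w ((size s + T.-1)%N, z, k)) e)
  (fun T e => truncL (zsT M T) T (fun z k => cw E w ((size s + T.-1)%N, z, k)) e).
move=> /(_ _ (iota 1 tau) e0 e0 (- Q) Q); rewrite size_iota.
have -> : (fun e T => truncL (zsT M T) T (fun z k => cw E w ((size s + T.-1)%N, z, k)) e) =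
   (fun e T => runC [seq ((size s + T.-1)%N, z) | z <- zsT M T] (cw E w) e).
  by apply: funext => e; apply: funext => T; rewrite (runC_block _ _ T).
apply; try lia; last by [].
apply: (loc_layer (zsf := fun T => zsT M T) (Tf := id)) => // t; exact: zsT_uniq.
Qed.

Lemma agree2 w : agree (- Q) Q (process2 E tau s w) (runC (OPS2 s tau M) (cw E w) id_config).
Proof.
rewrite runC_cat /LY2 runC_flatten.
set eL := foldl _ id_config (iota 0 tau).
have -> : process2 E tau s w = foldl (fun e i => (fun i e => Wstep (nth 0 s (size s - i.+1))
      (cw E w ((tau + i)%N, nth 0 s (size s - i.+1), false))
      (cw E w ((tau + i)%N, nth 0 s (size s - i.+1), true)) e) i e)
    (foldl (fun e j => layer (tau - j)%N (fun z k => cw E w (j, z, k)) e) id_config (iota 0 tau))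
    (iota 0 (size s)).
  by [].
have -> : runC (W2 s tau) (cw E w) eL = foldl (fun e i => (fun i e => Wstep (nth 0 s (size s - i.+1))
      (cw E w ((tau + i)%N, nth 0 s (size s - i.+1), false))
      (cw E w ((tau + i)%N, nth 0 s (size s - i.+1), true)) e) i e) eL (iota 0 (size s)).
  by rewrite /runC /W2 foldl_mapE.
apply: (agree_foldl (M := M%:Z)); rewrite ?size_iota; try lia.
  by move=> i e e' lo hi _ _; apply: Wstep_local.
rewrite /eL.
have -> : (fun e t => runC [seq (t, z) | z <- rev (zsT M (tau - t))] (cw E w) e) =
   (fun e t => truncL (rev (zsT M (tau - t))) (tau - t) (fun z k => cw E w (t, z, k)) e).
  by apply: funext => e; apply: funext => t; rewrite (runC_block _ _ (tau - t)).
apply: (agree_foldl (M := M%:Z)); rewrite ?size_iota; try lia; last by [].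
apply: (loc_layer (zsf := fun t => rev (zsT M (tau - t))) (Tf := fun t => (tau - t)%N)).
  by move=> t z; rewrite mem_rev.
by move=> t; rewrite rev_uniq zsT_uniq.
Qed.
End Agree.
Lemma iota1 n : iota 1 n = [seq i.+1 | i <- iota 0 n].
Proof. by rewrite -(iotaDl 1 0). Qed.

Lemma rev_map_iota (A : Type) (f : nat -> A) n :
  rev [seq f i | i <- iota 0 n] = [seq f (n - i.+1)%N | i <- iota 0 n].
Proof.
elim: n => // n IH.
rewrite [in LHS](_ : iota 0 n.+1 = iota 0 n ++ [:: n]); last by rewrite -addn1 iotaD.
rewrite map_cat rev_cat IH /= iota1 -map_comp subn1 /=; congr cons.
Qed.

Lemma mem_Keys ops (i : coin_index) : (i \in Keys ops) = (i.1 \in ops).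
Proof.
case: i => [[j z] b].
elim: ops => // o ops IH; rewrite /Keys /= -/(Keys ops) !inE IH orbA; congr orb.
case: o => j' z' /=; rewrite !xpair_eqE.
clear IH; by case: b; rewrite ?andbT ?andbF ?orbF.
Qed.

Lemma uniq_Keys ops : uniq ops -> uniq (Keys ops).
Proof.
elim: ops => // o ops IH /= /andP [no u].
rewrite /Keys /= -/(Keys ops) !inE !mem_Keys /= -surjective_pairing (negbTE no) IH //.
by rewrite xpair_eqE eqxx.
Qed.

Lemma uniq_blocks (A : eqType) (h : A -> nat) (g : A -> seq int) l :
  uniq l -> {in l &, injective h} -> (forall t, uniq (g t)) ->
  uniq (flatten [seq [seq (h t, z) | z <- g t] | t <- l]).
Proof.
elim: l => // t l IH /= /andP [tl u] inj ug.
rewrite cat_uniq IH ?andbT //; last first.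
  by move=> a b al bl; apply: inj; rewrite inE ?al ?bl orbT.
rewrite map_inj_uniq ?ug //=; last by move=> a b [].
apply/hasP => -[p /flattenP [bl /mapP [t' t'l ->] pb] /mapP [z _ e]].
move/mapP: pb => [z' _ e']; move: e; rewrite e' => -[e _].
have := inj t' t; rewrite inE t'l orbT inE eqxx => /(_ isT isT e) et.
by move: tl; rewrite -et t'l.
Qed.

Lemma mem_blocks (A : eqType) (h : A -> nat) (g : A -> seq int) l p :
  p \in flatten [seq [seq (h t, z) | z <- g t] | t <- l] -> exists2 t, t \in l & p.1 = h t.
Proof.
move=> /flattenP [bl /mapP [t tl ->] /mapP [z _ ->]]; by exists t.
Qed.

Lemma uniq_OPS1 s tau M : uniq (OPS1 s tau M).
Proof.
rewrite /OPS1 cat_uniq; apply/and3P; split.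
- by rewrite /W1 map_inj_uniq ?iota_uniq // => a b [].
- apply/hasP => -[p /mem_blocks [T TT e1] /mapP [j]].
  rewrite mem_iota => /andP [_ hj] e2; move: e1; rewrite e2 /= => e1; lia.
- apply: uniq_blocks; first exact: iota_uniq.
    by move=> a b; rewrite !mem_iota => ha hb e; lia.
  exact: zsT_uniq.
Qed.

Lemma uniq_OPS2 s tau M : uniq (OPS2 s tau M).
Proof.
rewrite /OPS2 cat_uniq; apply/and3P; split.
- apply: (@uniq_blocks _ id) => //; first exact: iota_uniq.
  by move=> t; rewrite rev_uniq zsT_uniq.
- apply/hasP => -[p /mapP [i _ e2] /(@mem_blocks _ id) [t]].
  rewrite mem_iota e2 /= => ht e; lia.
- by rewrite /W2 map_inj_uniq ?iota_uniq // => a b [] /eqP; rewrite eqn_add2l => /eqP.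
Qed.

Lemma pops_rev (R : realType) (tau : nat) (s : seq int) (x : int -> nat -> R) M :
  rev (pops (xprob1 tau s x) (OPS1 s tau M)) = pops (xprob2 tau s x) (OPS2 s tau M).
Proof.
rewrite /pops /OPS1 /OPS2 !map_cat rev_cat; congr cat.
- rewrite /LY1 /LY2 !map_flatten rev_flatten; congr flatten.
  rewrite -!map_comp iota1 -map_comp.
  rewrite rev_map_iota; apply/eq_in_map => j; rewrite mem_iota add0n => /andP [_ hj] /=.
  have -> : (tau - j.+1).+1 = (tau - j)%N by lia.
  rewrite -!map_rev -!map_comp; apply/eq_in_map => z _ /=.
  rewrite /xprob1 /xprob2 hj.
  have h1 : ~~ (size s + (tau - j.+1) < size s)%N by lia.
  have h2 : (size s + (tau - j.+1) < size s + tau)%N by lia.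
  have h3 : (size s + (tau - j.+1) - size s).+1 = (tau - j)%N by lia.
  by rewrite (negbTE h1) h2 h3.
- rewrite /W1 /W2 -!map_comp rev_map_iota; apply/eq_in_map => i.
  rewrite mem_iota => /andP [_ hi] /=.
  rewrite /xprob1 /xprob2.
  have h1 : (size s - i.+1 < size s)%N by lia.
  have h2 : ~~ (tau + i < tau)%N by lia.
  have h3 : (tau + i < tau + size s)%N by lia.
  by rewrite h1 eqxx (negbTE h2) h3 addKn eqxx.
Qed.
Lemma Wstep_bij z a b (eta : config) : bijective eta -> bijective (Wstep z a b eta).
Proof.
move=> be; rewrite /Wstep; case: ifP => // _.
have -> : swapAt z eta = (fun y => eta (sw z y)) by apply: funext => y; rewrite swapAtE.
case: be => g h1 h2; exists (fun y => sw z (g y)) => y /=; by rewrite ?h1 ?h2 swK.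
Qed.

Lemma layer_bij T c (eta : config) : bijective eta -> bijective (layer T c eta).
Proof.
move=> be.
pose sf y := swapb (c (zy T y) false) (c (zy T y) true) (eta (zy T y)) (eta (zy T y + 1)).
pose pi y := if sf y then (if y == zy T y then zy T y + 1 else zy T y) else y.
have -> : layer T c eta = (fun y => eta (pi y)).
  apply: funext => y; rewrite layerE /= /pi /sf; case: ifP => _.
    by case: (y == zy T y).
  case: eqP => [e|ne]; first by rewrite -e.
  congr eta; case: (zy_range T y); lia.
suff piK : forall y, pi (pi y) = y.
  case: be => g h1 h2; apply: (@Bijective _ _ _ (fun y => pi (g y))) => y /=.
    by rewrite h1 piK.
  by rewrite piK h2.
move=> y; rewrite /pi; case hs: (sf y); last by rewrite hs.
have hz : zy T (if y == zy T y then zy T y + 1 else zy T y) = zy T y.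
  by apply: zy_pair; [exact: zy_par | case: ifP; [right|left]].
have hsP : sf (if y == zy T y then zy T y + 1 else zy T y) = true.
  by rewrite /sf hz; exact: hs.
rewrite hsP hz.
have [e|ne] := eqVneq y (zy T y).
  have -> : (zy T y + 1 == zy T y) = false by apply/negbTE/eqP; lia.
  by [].
by rewrite eqxx; case: (zy_range T y) ne => h ne; [move/eqP: ne | ]; lia.
Qed.

Lemma foldl_bij (A : Type) (f : config -> A -> config) :
  (forall e a, bijective e -> bijective (f e a)) ->
  forall l e, bijective e -> bijective (foldl f e l).
Proof. by move=> hf; elim=> //= a l IH e be; apply: IH; apply: hf. Qed.

Lemma id_bij : bijective id_config.
Proof. by exists id_config. Qed.

Lemma proc1_bij d (Omega : measurableType d) (E : coin_index -> set Omega) tau s w :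
  bijective (process1 E tau s w).
Proof.
apply: foldl_bij => [e a be|]; first exact: layer_bij.
apply: foldl_bij => [e a be|]; [exact: Wstep_bij | exact: id_bij].
Qed.

Lemma proc2_bij d (Omega : measurableType d) (E : coin_index -> set Omega) tau s w :
  bijective (process2 E tau s w).
Proof.
apply: foldl_bij => [e a be|]; first exact: Wstep_bij.
apply: foldl_bij => [e a be|]; [exact: layer_bij | exact: id_bij].
Qed.

Lemma inv_configP (eta : config) : bijective eta ->
  forall z a, (inv_config eta z == a) = (eta a == z).
Proof.
case=> g h1 h2 z a.
have -> : inv_config eta z = g z.
  by rewrite /inv_config; apply: xget_unique => [|y <-]; [exact: h2 | rewrite h1].
by apply/eqP/eqP => [<-|<-]; [exact: h2 | exact: h1].
Qed.

Definition cyl (l : seq (int * int)) : set config :=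
  [set eta | all (fun p => eta p.1 == p.2) l].

Fixpoint bnd (l : seq (int * int)) : nat :=
  if l is p :: l' then (absz p.1 + absz p.2 + bnd l')%N else 0%N.

Lemma bndP l p : p \in l -> (absz p.1 <= bnd l)%N /\ (absz p.2 <= bnd l)%N.
Proof.
elim: l => // a l IH; rewrite inE => /orP [/eqP ->|/IH [h1 h2]] /=.
  set u := absz a.1; set v := absz a.2; set b := bnd l; split; lia.
set u := absz a.1; set v := absz a.2; set b := bnd l.
set u' := absz p.1 in h1 *; set v' := absz p.2 in h2 *; split; lia.
Qed.
Lemma abs_bound (z : int) (n : nat) : (absz z <= n)%N -> - (n%:Z) <= z <= n%:Z.
Proof. by move=> h; rewrite -ler_norml -abszE lez_nat. Qed.

Section Final.
Variables (R : realType) (q : R) (tau : nat) (x : int -> nat -> R) (s : seq int).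
Variables (d1 : measure_display) (Omega1 : measurableType d1).
Variables (P1 : probability Omega1 R) (E1 : coin_index -> set Omega1).
Variables (d2 : measure_display) (Omega2 : measurableType d2).
Variables (P2 : probability Omega2 R) (E2 : coin_index -> set Omega2).
Hypothesis hc1 : coin_family P1 E1 (xprob1 tau s x) q.
Hypothesis hc2 : coin_family P2 E2 (xprob2 tau s x) q.

Definition pre1 (A : set config) := process1 E1 tau s @^-1` A.
Definition pre2 (A : set config) :=
  (fun w => inv_config (process2 E2 tau s w)) @^-1` A.

Lemma cyl_eq l : [/\ measurable (pre1 (cyl l)), measurable (pre2 (cyl l))
  & P1 (pre1 (cyl l)) = P2 (pre2 (cyl l))].
Proof.
pose Qn := bnd l; pose M := (Qn + tau + size s)%N.
have hM : Qn%:Z + tau%:Z + (size s)%:Z <= M%:Z by rewrite /M; lia.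
have hQ : 0 <= Qn%:Z by [].
pose f1 := fun st : state => all (fun p => st.1 p.1 == p.2) l.
pose f2 := fun st : state => all (fun p => st.1 p.2 == p.1) l.
have e1 : pre1 (cyl l) = [set w | f1 (runS (OPS1 s tau M) (cw E1 w) st0)].
  have hall : forall w, all (fun p => process1 E1 tau s w p.1 == p.2) l
                        = f1 (runS (OPS1 s tau M) (cw E1 w) st0).
    move=> w; rewrite /f1 runS_fst /=; apply: eq_in_all => p pl.
    have [b1 b2] := bndP pl.
    by rewrite (agree1 E1 hM hQ w) //; apply: abs_bound.
  by apply/seteqP; split => w /=; rewrite /pre1 /cyl /= hall.
have e2 : pre2 (cyl l) = [set w | f2 (runS (OPS2 s tau M) (cw E2 w) st0)].
  have hall : forall w, all (fun p => inv_config (process2 E2 tau s w) p.1 == p.2) l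
                        = f2 (runS (OPS2 s tau M) (cw E2 w) st0).
    move=> w; rewrite /f2 runS_fst /=; apply: eq_in_all => p pl.
    have [b1 b2] := bndP pl.
    rewrite inv_configP; last exact: proc2_bij.
    by rewrite (agree2 E2 hM hQ w (abs_bound b2)).
  by apply/seteqP; split => w /=; rewrite /pre2 /cyl /= hall.
have [m1 P1e] := prob_run hc1 f1 st0 (uniq_Keys (uniq_OPS1 s tau M)).
have [m2 P2e] := prob_run hc2 f2 st0 (uniq_Keys (uniq_OPS2 s tau M)).
rewrite e1 e2; split => //.
rewrite P1e P2e; congr EFin.
rewrite main_comb pops_rev; apply: Rseq_ext; last exact: valid_st0.
move=> [e x'] [/= h1 h2]; rewrite /indf /flip /f1 /f2 /=.
have -> : all (fun p => x' p.1 == p.2) l = all (fun p => e p.2 == p.1) l.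
  apply: eq_all => p; apply/eqP/eqP => [<-|<-]; [exact: h2 | exact: h1].
by [].
Qed.

Definition Gc : set (set config) := [set A | exists l, A = cyl l].
Definition Hc : set (set config) := [set A |
  [/\ measurable (pre1 A), measurable (pre2 A) & P1 (pre1 A) = P2 (pre2 A)]].

Lemma Gc_Hc : Gc `<=` Hc.
Proof. by move=> A [l ->]; apply: cyl_eq. Qed.

Lemma Gc_setI : setI_closed Gc.
Proof.
move=> A B [l1 ->] [l2 ->]; exists (l1 ++ l2).
apply/seteqP; split => e /=; rewrite /cyl /= all_cat.
  by move=> [-> ->].
by move/andP.
Qed.

Lemma prob_lty d (T : measurableType d) (P : probability T R) (A : set T) :
  measurable A -> (P A < +oo)%E.
Proof. by move=> mA; apply: (le_lt_trans (probability_le1 P mA)); exact: ltry. Qed.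

Lemma Hc_lambda : lambda_system setT Hc.
Proof.
split.
- by [].
- split; [exact: measurableT | exact: measurableT |].
  by rewrite /pre1 /pre2 !preimage_setT !probability_setT.
- move=> A B BA [mA1 mA2 eA] [mB1 mB2 eB]; split.
  + exact: measurableD.
  + exact: measurableD.
  + have s1 : pre1 B `<=` pre1 A by move=> w; apply: BA.
    have s2 : pre2 B `<=` pre2 A by move=> w; apply: BA.
    have -> : pre1 (A `\` B) = pre1 A `\` pre1 B by [].
    have -> : pre2 (A `\` B) = pre2 A `\` pre2 B by [].
    rewrite measureD // ?(setIidr s1); last exact: prob_lty.
    rewrite measureD // ?(setIidr s2); last exact: prob_lty.
    by congr (_ - _)%E; [exact: eA | exact: eB].
- move=> F ndF HF.
  have m1 i : measurable (pre1 (F i)) by case: (HF i).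
  have m2 i : measurable (pre2 (F i)) by case: (HF i).
  have mU1 : measurable (\bigcup_i pre1 (F i)) by apply: bigcupT_measurable.
  have mU2 : measurable (\bigcup_i pre2 (F i)) by apply: bigcupT_measurable.
  split; [exact: mU1 | exact: mU2 |].
  have h1 : {homo (fun i => pre1 (F i)) : n m / (n <= m)%N >-> (n <= m)%O}.
    move=> n m nm; apply/subsetPset => w; rewrite /pre1 /=.
    by have := ndF n m nm; move/subsetPset; apply.
  have h2 : {homo (fun i => pre2 (F i)) : n m / (n <= m)%N >-> (n <= m)%O}.
    move=> n m nm; apply/subsetPset => w; rewrite /pre2 /=.
    by have := ndF n m nm; move/subsetPset; apply.
  have c1 := @nondecreasing_cvg_mu _ _ R P1 _ m1 mU1 h1.
  have c2 := @nondecreasing_cvg_mu _ _ R P2 _ m2 mU2 h2.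
  have eqf : (P1 \o (fun i => pre1 (F i))) = (P2 \o (fun i => pre2 (F i))).
    by apply: funext => i /=; case: (HF i).
  have e3 := congr1 (fun f => lim (f @ \oo)) eqf.
  exact: (etrans (esym (cvg_lim (@ereal_hausdorff R) c1))
           (etrans e3 (cvg_lim (@ereal_hausdorff R) c2))).
Qed.

Lemma final_eq (A : set config) : config_measurable A ->
  P1 (pre1 A) = P2 (pre2 A).
Proof.
move=> mA.
have sub : <<s Gc >> A.
  apply: (sub_sigma_algebra2 _ mA) => B [z [a ->]]; exists [:: (z, a)].
  apply/seteqP; split => e /=; rewrite /cyl /= andbT; first by move=> ->.
  by move/eqP.
have := lambda_system_subset Gc_setI Hc_lambda Gc_Hc _ sub.
by case/(_ (fun _ _ _ _ => I)).
Qed.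
End Final.

Unset Implicit Arguments.

Theorem theorem3p2 (R : realType) (q : R) (tau : nat) (x : int -> nat -> R)
  (s : seq int)
  (d1 : measure_display) (Omega1 : measurableType d1) (P1 : probability Omega1 R)
  (E1 : coin_index -> set Omega1)
  (d2 : measure_display) (Omega2 : measurableType d2) (P2 : probability Omega2 R)
  (E2 : coin_index -> set Omega2) :
  0 <= q <= 1 ->
  odd tau ->
  (forall (z : int) (T : nat), (1 <= T <= tau)%N -> (2 %| z - T%:Z)%Z ->
     0 <= x z T < 1) ->
  coin_family P1 E1 (xprob1 tau s x) q ->
  coin_family P2 E2 (xprob2 tau s x) q ->
  [/\ {ae P1, forall w, bijective (process1 E1 tau s w)},
      {ae P2, forall w, bijective (process2 E2 tau s w)}
    & forall A : set config, config_measurable A ->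
        P1 (process1 E1 tau s @^-1` A)
        = P2 ((fun w => inv_config (process2 E2 tau s w)) @^-1` A)].
Proof.
move=> _ _ _ hc1 hc2; split.
- by apply: aeW => w; exact: proc1_bij.
- by apply: aeW => w; exact: proc2_bij.
- by move=> A mA; exact: (final_eq hc1 hc2 mA).
Qed.
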